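(* Let $\mathbf{G}$ be a labeled multilayer directed network (as defined in the context) on node set $\mathcal{V}=\{v_1,\dots,v_n\}$ with label set $\{C_1,\dots,C_h\}$ and attractiveness values $A_{i,l}$ such that, for each $l$, the values $A_{1,l},\dots,A_{n,l}$ are pairwise distinct. Suppose that $\mathbf{G}$ is extremal, i.e. $P(\mathbf{G})=\min_{\mathbf{H}\in\mathcal{R}(\mathbf{G})}P(\mathbf{H})$ or $P(\mathbf{G})=\max_{\mathbf{H}\in\mathcal{R}(\mathbf{G})}P(\mathbf{H})$. Let $E$ be a nonempty subset of the edge set $\mathcal{E}$ of $\mathbf{G}$ such that all edges of $E$ lie in the same layer $\mathbf{G}_l$ (i.e. $C_l\in\mathcal{C}(e)$ for every $e\in E$). Then there exists a node $v\in\lceil E\rceil_{tar}$ that has no $(2,\mathbf{G})$-follower in $\lceil E\rceil_{src}$.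
   Context: A labeled multilayer directed network $\mathbf{G}=(\mathcal{V},\mathcal{E})$ is a finite simple directed graph (no self-loops, no multiple edges) on nodes $\mathcal{V}=\{v_1,\dots,v_n\}$ in which each edge $v_i\to v_j\in\mathcal{E}$ carries a nonempty label set $\mathcal{C}(i,j)\subseteq\{C_1,\dots,C_h\}$; an ordered pair $(v_i,v_j)$ is an edge iff $\mathcal{C}(i,j)\neq\emptyset$. The $l$-th layer $\mathbf{G}_l=(\mathcal{V}_l,\mathcal{E}_l)$ consists of all edges with $C_l\in\mathcal{C}(i,j)$ and their endpoints. Each node $v_i$ has, for each $l$, an attractiveness $A_{i,l}\ge 0$; let $A_{\max,l}=\max_i A_{i,l}$. The potential energy of $v_i$ in layer $l$ is $P_l(i)=\sum_{j=1}^n (A_{\max,l}-A_{j,l})\,\chi(v_i\to v_j\in\mathcal{E}_l)$, and the total potential energy is $P(\mathbf{G})=\sum_{i=1}^n\sum_{l=1}^h P_l(i)$. A rewiring move replaces, for some layer $l$ and some edge $v_j\to v_k\in\mathcal{E}_l$, the layer-$l$ edge $v_j\to v_k$ by a layer-$l$ edge $v_j\to v_w$ with $w\neq j$ and $v_j\to v_w\notin\mathcal{E}_l$ (i.e. $C_l$ is removed from $\mathcal{C}(j,k)$ and added to $\mathcal{C}(j,w)$; the edge $v_j\to v_k$ disappears if its label set becomes empty, and $v_j\to v_w$ is created if it did not exist). $\mathcal{R}(\mathbf{G})$ denotes the set of all labeled multilayer networks (same nodes, same attractiveness values) obtainable from $\mathbf{G}$ by finite sequences of rewiring moves (including $\mathbf{G}$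 itself). For an edge set $E$, $\lceil E\rceil_{src}$ (resp. $\lceil E\rceil_{tar}$) is the set of source (resp. target) nodes of edges of $E$. A node $v_i$ is a $(2,\mathbf{G})$-follower of $v_j$ if the directed shortest-path distance from $v_i$ to $v_j$ in $\mathbf{G}$ (ignoring labels) equals exactly $2$. *)

(* Defs.v *)
From HB Require Import structures.
From mathcomp Require Import all_boot all_order all_algebra.
From Stdlib Require Import Relations.Relation_Operators.
Set Implicit Arguments. Unset Strict Implicit. Unset Printing Implicit Defensive.
Import Order.TTheory GRing.Theory Num.Theory.
Local Open Scope ring_scope.

(* Nodes v_1..v_n are 'I_n, labels C_1..C_h are 'I_h.
   A labeled multilayer directed network is its label-set function:
   G (i,j) = C(i,j); (i,j) is an edge iff G (i,j) != set0. *)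
Definition network (n h : nat) := {ffun 'I_n * 'I_n -> {set 'I_h}}.

(* no self-loops (multiple edges are excluded by construction) *)
Definition simple_net n h (G : network n h) : Prop :=
  forall i : 'I_n, G (i, i) = set0.

Definition is_edge n h (G : network n h) (i j : 'I_n) : bool := G (i, j) != set0.

(* A_max,l = max_i A_{i,l}  (A >= 0, so 0 is a neutral base) *)
Definition Amax (R : realDomainType) n h (A : 'I_n -> 'I_h -> R) (l : 'I_h) : R :=
  \big[Num.max/0]_(j : 'I_n) A j l.

Definition pot_layer (R : realDomainType) n h (A : 'I_n -> 'I_h -> R)
  (G : network n h) (l : 'I_h) (i : 'I_n) : R :=
  \sum_(j : 'I_n) (Amax A l - A j l) * (l \in G (i, j))%:R.

Definition potential (R : realDomainType) n h (A : 'I_n -> 'I_h -> R)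
  (G : network n h) : R :=
  \sum_(i : 'I_n) \sum_(l : 'I_h) pot_layer A G l i.

Definition rewire_step n h (G H : network n h) : Prop :=
  exists (l : 'I_h) (j k w : 'I_n),
    [/\ l \in G (j, k), w != j, l \notin G (j, w) &
      H = [ffun p => if p == (j, k) then G p :\ l
                     else if p == (j, w) then l |: G p else G p]].

Definition rewirings n h (G H : network n h) : Prop :=
  clos_refl_trans (network n h) (@rewire_step n h) G H.

Definition extremal (R : realDomainType) n h (A : 'I_n -> 'I_h -> R)
  (G : network n h) : Prop :=
  (forall H, rewirings G H -> potential A G <= potential A H) \/
  (forall H, rewirings G H -> potential A H <= potential A G).

Definition dist2 n h (G : network n h) (i j : 'I_n) : Prop :=
  [/\ i != j, ~~ is_edge G i j & exists k : 'I_n, is_edge G i k && is_edge G k j].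

Definition follower2 n h (G : network n h) (i j : 'I_n) : Prop := dist2 G i j.

Definition src_nodes n (E : {set 'I_n * 'I_n}) : {set 'I_n} := [set e.1 | e in E].
Definition tar_nodes n (E : {set 'I_n * 'I_n}) : {set 'I_n} := [set e.2 | e in E].

(* Main.v *)
Require Import Defs.
From mathcomp Require Import all_boot all_order all_algebra.
From mathcomp Require Import lra.
From Stdlib Require Import Relations.Relation_Operators.
Import Order.TTheory GRing.Theory Num.Theory.
Local Open Scope ring_scope.

Lemma ex_max (R : realDomainType) (T : finType) (S : {set T}) (f : T -> R) :
  S != set0 -> exists2 v, v \in S & forall x, x \in S -> f x <= f v.
Proof.
case/set0Pn=> x0 Hx0.
case: (@arg_maxP _ R T x0 (mem S) f Hx0) => v Hv Hm.
by exists v.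
Qed.

Lemma ex_min (R : realDomainType) (T : finType) (S : {set T}) (f : T -> R) :
  S != set0 -> exists2 v, v \in S & forall x, x \in S -> f v <= f x.
Proof.
case/set0Pn=> x0 Hx0.
case: (@arg_minP _ R T x0 (mem S) f Hx0) => v Hv Hm.
by exists v.
Qed.

Lemma sum_ind_r (R : realDomainType) (T : finType) (F : T -> R) (j : T) :
  \sum_i F i * (i == j)%:R = F j.
Proof.
rewrite (bigD1 j) //= eqxx mulr1 big1 ?addr0 // => i /negbTE ->.
by rewrite mulr0.
Qed.

Lemma sum_ind_l (R : realDomainType) (T : finType) (F : T -> R) (j : T) :
  \sum_i (i == j)%:R * F i = F j.
Proof.
rewrite -[RHS](@sum_ind_r R T F j); apply: eq_bigr => i _; exact: mulrC.
Qed.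

Section Rew.
Variables (R : realDomainType) (n h : nat) (G : network n h)
  (A : 'I_n -> 'I_h -> R) (l : 'I_h) (j k w : 'I_n).
Hypotheses (Hk : l \in G (j, k)) (Hw : l \notin G (j, w)).

Definition Hnet : network n h := [ffun p => if p == (j, k) then G p :\ l
                     else if p == (j, w) then l |: G p else G p].

Lemma ind_eq (i jj : 'I_n) (l' : 'I_h) :
  (l' \in Hnet (i, jj))%:R = (l' \in G (i, jj))%:R
    + (i == j)%:R * ((l' == l)%:R * (jj == w)%:R)
    - (i == j)%:R * ((l' == l)%:R * (jj == k)%:R) :> R.
Proof.
have wk : w != k by apply/eqP=> E; move: Hw; rewrite E Hk.
rewrite ffunE !xpair_eqE.
case: (eqVneq i j) => [->|ij]; rewrite /= ?mul0r ?addr0 ?subr0 //.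
rewrite mul1r.
case: (eqVneq jj k) => [->|jk].
  have kw : (k == w) = false by apply/negbTE; rewrite eq_sym.
  rewrite /= kw mulr0 addr0 mulr1 in_setD1.
  case: (eqVneq l' l) => [->|_]; first by rewrite Hk /= mulr1 subrr.
  by rewrite /= mulr0 subr0.
rewrite /= !mulr0 subr0.
case: (eqVneq jj w) => [->|jw]; rewrite /= ?mulr0 ?addr0 // mulr1 in_setU1.
case: (eqVneq l' l) => [->|_]; first by rewrite (negbTE Hw) /= add0r.
by rewrite /= addr0.
Qed.

Lemma pot_H : potential A Hnet =
  potential A G + (Amax A l - A w l) - (Amax A l - A k l).
Proof.
rewrite /potential /pot_layer.
under eq_bigr => i _ do under eq_bigr => l' _ do under eq_bigr => jj _ do
  rewrite ind_eq mulrBr mulrDr.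
under eq_bigr => i _ do under eq_bigr => l' _ do rewrite sumrB big_split /=.
under eq_bigr => i _ do rewrite sumrB big_split /=.
rewrite sumrB big_split /=.
have E4 : forall a b c d : R, a * (b * (c * d)) = b * (c * (a * d)).
  by move=> a b c d; rewrite mulrCA (mulrCA a).
congr (_ + _ - _);
  under eq_bigr => i _ do under eq_bigr => l' _ do under eq_bigr => jj _ do
    rewrite E4;
  under eq_bigr => i _ do under eq_bigr => l' _ do rewrite -mulr_sumr -mulr_sumr sum_ind_r;
  under eq_bigr => i _ do rewrite -mulr_sumr sum_ind_l;
  by rewrite sum_ind_l.
Qed.
End Rew.
Arguments Hnet {n h}.

Theorem lemma1 (R : realDomainType) (n h : nat) (G : network n h)
  (A : 'I_n -> 'I_h -> R) (E : {set 'I_n * 'I_n}) (l : 'I_h) :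
  simple_net G ->
  (forall i l', 0 <= A i l') ->
  (forall l', injective (fun i => A i l')) ->
  extremal A G ->
  E != set0 ->
  (forall e, e \in E -> l \in G e) ->
  exists2 v, v \in tar_nodes E &
    forall u, u \in src_nodes E -> ~ follower2 G u v.
Proof.
move=> Hs A0 Ainj Hext E0 HE.
have key : forall u v, u \in src_nodes E -> follower2 G u v ->
  exists2 k, k \in tar_nodes E & [/\ k != v,
    potential A (Hnet G l u k v) =
      potential A G + (Amax A l - A v l) - (Amax A l - A k l) &
    rewirings G (Hnet G l u k v)].
  move=> u v /imsetP [e eE ->] [uv nuv _].
  have Hk : l \in G (e.1, e.2) by rewrite -surjective_pairing; apply: HE.
  have Hw : l \notin G (e.1, v).
    by move: nuv; rewrite /is_edge negbK => /eqP ->; rewrite in_set0.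
  exists e.2; first exact: imset_f.
  split.
  - by apply/eqP => kv; move: Hw; rewrite -kv Hk.
  - exact: pot_H.
  - apply: rt_step; exists l, e.1, e.2, v; split => //.
    by rewrite eq_sym.
have T0 : tar_nodes E != set0.
  case/set0Pn: E0 => e eE; apply/set0Pn; exists e.2; exact: imset_f.
case: Hext => [Hmin|Hmax].
- have [v vT vM] := @ex_max R _ _ (fun x => A x l) T0.
  exists v => // u Hu Hf.
  have [k kT [kv Hp Hr]] := key u v Hu Hf.
  have := Hmin _ Hr; rewrite Hp => H1.
  have := vM k kT => /= H2.
  have Ek : A k l = A v l by lra.
  by move: kv; rewrite (Ainj l _ _ Ek) eqxx.
- have [v vT vM] := @ex_min R _ _ (fun x => A x l) T0.
  exists v => // u Hu Hf.
  have [k kT [kv Hp Hr]] := key u v Hu Hf.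
  have := Hmax _ Hr; rewrite Hp => H1.
  have := vM k kT => /= H2.
  have Ek : A k l = A v l by lra.
  by move: kv; rewrite (Ainj l _ _ Ek) eqxx.
Qed.
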